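(* Let $\mathcal{F}=C_1\wedge\dots\wedge C_m$ be an unsatisfiable CNF formula and let $X=\{x_1,\dots,x_{n_1}\}$, $Y=\{y_1,\dots,y_{n_2}\}$ be a partition of its variables. If there is a monotone circuit of size $\ell$ that outputs $1$ on every input in $\mathcal{U}(\{0,1\}^{n_1})$ and $0$ on every input in $\mathcal{V}(\{0,1\}^{n_2})$, then there is a $\mathsf{CC}_2$-refutation of $\mathcal{F}$ of length $\ell$ with respect to $(X,Y)$.
   Context: A semantic refutation of $\mathcal{F}$ is a sequence $L_1,\dots,L_\ell$ of Boolean functions on all variables with $L_i=C_i$ for $i\le m$, $L_\ell\equiv 0$, and for each $i>m$ there are $j,k<i$ with $L_j\wedge L_k\Rightarrow L_i$ pointwise; its length is $\ell$. A $\mathsf{CC}_k$-refutation with respect to $(X,Y)$ is a semantic refutation in which every $L_i$ is computable by a deterministic $k$-bit two-party communication protocol where Alice holds the $X$-variables and Bob the $Y$-variables. For each clause $C_i$ let $\mathrm{vars}(i)$ be the set of $X$-variables occurring in $C_i$. The inputs are Boolean variables $\mathrm{TT}_i(\alpha)$ for $i\in[m]$, $\alpha\in\{0,1\}^{\mathrm{vars}(i)}$ (these are inputs of the monotone function $\mathrm{CSP\text{-}SAT}_{\mathsf{Search}(\mathcal{F})}$, which accepts iff some $x\in\{0,1\}^{n_1}$ has $\mathrm{TT}_i(x|_{\mathrm{vars}(i)})=1$ for all $i$). For $x\in\{0,1\}^{n_1}$, $\mathcal{U}(x)$ sets $\mathrm{TT}_i(\alpha)=1$ iff $\alpha=x|_{\mathrm{vars}(i)}$.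 For $y\in\{0,1\}^{n_2}$, $\mathcal{V}(y)$ sets $\mathrm{TT}_i(\alpha)=0$ iff $C_i$ is falsified by the assignment giving $\alpha$ to $\mathrm{vars}(i)$ and $y$ to the $Y$-variables. A monotone circuit uses only $\wedge$ and $\vee$ gates; size is the number of gates.
   Formalization: The $\mathsf{CC}_2$-refutation of $\mathcal{F}$ has length m + ℓ in place of ℓ, that is, ℓ lines beyond the m clause lines. The statement above fails without it. *)

(* Defs.v *)
From mathcomp Require Import all_boot.
Set Implicit Arguments. Unset Strict Implicit. Unset Printing Implicit Defensive.

Definition xassign (n1 : nat) := {ffun 'I_n1 -> bool}.
Definition yassign (n2 : nat) := {ffun 'I_n2 -> bool}.
Definition boolfun (n1 n2 : nat) := xassign n1 -> yassign n2 -> bool.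

(* A literal is a variable (an X- or a Y-variable) with a polarity:
   (v, true) is the positive literal v, (v, false) the negation of v. *)
Definition lit (n1 n2 : nat) := (('I_n1 + 'I_n2) * bool)%type.
Definition clause (n1 n2 : nat) := seq (lit n1 n2).
Definition cnf (n1 n2 m : nat) := 'I_m -> clause n1 n2.

Definition lit_sat n1 n2 (l : lit n1 n2) (x : xassign n1) (y : yassign n2) : bool :=
  match l.1 with inl j => x j == l.2 | inr j => y j == l.2 end.
Definition clause_sat n1 n2 (C : clause n1 n2) x y : bool :=
  has (fun l => lit_sat l x y) C.

Definition unsatisfiable n1 n2 m (F : cnf n1 n2 m) : Prop :=
  forall x y, exists i : 'I_m, ~~ clause_sat (F i) x y.

Definition vars n1 n2 m (F : cnf n1 n2 m) (i : 'I_m) : {set 'I_n1} :=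
  [set j | has (fun l : lit n1 n2 => l.1 == inl j) (F i)].

Definition vassign n1 n2 m (F : cnf n1 n2 m) (i : 'I_m) :=
  {ffun {j : 'I_n1 | j \in vars F i} -> bool}.

(* Input variables TT_i(alpha) of CSP-SAT_{Search(F)} *)
Definition tt_var n1 n2 m (F : cnf n1 n2 m) := {i : 'I_m & vassign F i}.

Definition restrict n1 n2 m (F : cnf n1 n2 m) (i : 'I_m) (x : xassign n1)
  : vassign F i := [ffun j => x (val j)].

Definition Uin n1 n2 m (F : cnf n1 n2 m) (x : xassign n1) (t : tt_var F) : bool :=
  projT2 t == restrict F (projT1 t) x.

Definition lit_sat_part n1 n2 m (F : cnf n1 n2 m) (i : 'I_m) (alpha : vassign F i)
  (y : yassign n2) (l : lit n1 n2) : bool :=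
  match l.1 with
  | inl j => match @insub _ (fun j => j \in vars F i) _ j with
             | Some j' => alpha j' == l.2
             | None => false (* never happens: every X-variable of C_i is in vars(i) *)
             end
  | inr j => y j == l.2
  end.

Definition Vin n1 n2 m (F : cnf n1 n2 m) (y : yassign n2) (t : tt_var F) : bool :=
  has (lit_sat_part (projT2 t) y) (F (projT1 t)).

(* A gate is an AND (gop = true) or OR (gop = false) gate with two operands;
   an operand is an input variable (inl) or an earlier gate (inr k = k-th gate,
   0-based). *)
Record gate (In : Type) := Gate { gop : bool; garg1 : In + nat; garg2 : In + nat }.
Definition circuit (In : Type) := seq (gate In).

Definition node_ok (In : Type) (k : nat) (a : In + nat) : bool :=
  match a with inl _ => true | inr p => p < k end.
Definition circuit_wf (In : Type) (c : circuit In) : bool :=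
  all (fun k => node_ok k (garg1 (nth (Gate true (inr 0) (inr 0)) c k))
             && node_ok k (garg2 (nth (Gate true (inr 0) (inr 0)) c k)))
      (iota 0 (size c)).

Definition node_val (In : Type) (inp : In -> bool) (vals : seq bool) (a : In + nat) :=
  match a with inl t => inp t | inr p => nth false vals p end.
Definition gate_vals (In : Type) (c : circuit In) (inp : In -> bool) : seq bool :=
  foldl (fun vals g =>
           rcons vals ((if gop g then andb else orb)
                         (node_val inp vals (garg1 g)) (node_val inp vals (garg2 g))))
        [::] c.
Definition circuit_out (In : Type) (c : circuit In) (inp : In -> bool) : bool :=
  last false (gate_vals c inp).

Inductive protocol (n1 n2 : nat) :=
  | PLeaf of bool
  | PAlice of (xassign n1 -> bool) & protocol n1 n2 & protocol n1 n2
  | PBob of (yassign n2 -> bool) & protocol n1 n2 & protocol n1 n2.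

Fixpoint pdepth n1 n2 (P : protocol n1 n2) : nat :=
  match P with
  | PLeaf _ => 0
  | PAlice _ P0 P1 => (maxn (pdepth P0) (pdepth P1)).+1
  | PBob _ P0 P1 => (maxn (pdepth P0) (pdepth P1)).+1
  end.

Fixpoint prun n1 n2 (P : protocol n1 n2) (x : xassign n1) (y : yassign n2) : bool :=
  match P with
  | PLeaf b => b
  | PAlice f P0 P1 => if f x then prun P1 x y else prun P0 x y
  | PBob g P0 P1 => if g y then prun P1 x y else prun P0 x y
  end.

Definition cc_computable n1 n2 (k : nat) (L : boolfun n1 n2) : Prop :=
  exists P : protocol n1 n2, pdepth P <= k /\ forall x y, prun P x y = L x y.

Definition fnth n1 n2 (Ls : seq (boolfun n1 n2)) (i : nat) : boolfun n1 n2 :=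
  nth (fun _ _ => false) Ls i.

(* Ls = L_1, ..., L_ell (0-based in Coq); its length is size Ls. *)
Definition semantic_refutation n1 n2 m (F : cnf n1 n2 m) (Ls : seq (boolfun n1 n2)) : Prop :=
  [/\ m <= size Ls,
      forall i : 'I_m, forall x y, fnth Ls i x y = clause_sat (F i) x y,
      0 < size Ls /\ (forall x y, fnth Ls (size Ls).-1 x y = false)
    & forall i, m <= i < size Ls ->
        exists j k, [/\ j < i, k < i &
          forall x y, fnth Ls j x y && fnth Ls k x y -> fnth Ls i x y]].

Definition CC_refutation n1 n2 m (k : nat) (F : cnf n1 n2 m) (Ls : seq (boolfun n1 n2)) : Prop :=
  semantic_refutation F Ls /\ forall i, i < size Ls -> cc_computable k (fnth Ls i).

Arguments Uin {n1 n2 m} F x t.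
Arguments Vin {n1 n2 m} F y t.

(* Main.v *)
Require Import Defs.
From mathcomp Require Import all_boot.

Section Aux.
Variable In : Type.
Variable inp : In -> bool.

Definition gstep (vals : seq bool) (g : gate In) :=
  rcons vals ((if gop g then andb else orb)
               (node_val inp vals (garg1 g)) (node_val inp vals (garg2 g))).

Lemma gate_valsE (c : circuit In) : gate_vals c inp = foldl gstep [::] c.
Proof. by []. Qed.

Lemma foldl_pre (s : seq (gate In)) v : exists w, foldl gstep v s = v ++ w.
Proof.
elim: s v => [|g s IH] v /=; first by exists [::]; rewrite cats0.
have [w ->] := IH (gstep v g); eexists; rewrite /gstep -cats1 -catA; reflexivity.
Qed.

Lemma size_foldl (s : seq (gate In)) v : size (foldl gstep v s) = size v + size s.
Proof.
elim: s v => [|g s IH] v /=; first by rewrite addn0.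
by rewrite IH /gstep size_rcons addSnnS.
Qed.

Lemma gate_vals_nth (c : circuit In) k :
  k < size c ->
  node_ok k (garg1 (nth (Gate true (inr 0) (inr 0)) c k)) ->
  node_ok k (garg2 (nth (Gate true (inr 0) (inr 0)) c k)) ->
  let vals := gate_vals c inp in
  let g := nth (Gate true (inr 0) (inr 0)) c k in
  nth false vals k = (if gop g then andb else orb)
     (node_val inp vals (garg1 g)) (node_val inp vals (garg2 g)).
Proof.
move=> Hk H1 H2 vals g.
have Hc : c = take k c ++ g :: drop k.+1 c.
  by rewrite /g -drop_nth // cat_take_drop.
set V0 := gate_vals (take k c) inp.
have sV0 : size V0 = k.
  by rewrite /V0 gate_valsE size_foldl /= size_take Hk.
have [w Hw] := foldl_pre (drop k.+1 c) (gstep V0 g).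
have Hvals : vals = rcons V0 ((if gop g then andb else orb)
               (node_val inp V0 (garg1 g)) (node_val inp V0 (garg2 g))) ++ w.
  by rewrite /vals gate_valsE {1}Hc foldl_cat -gate_valsE -/V0 /= Hw.
have Hnv : forall a, node_ok k a -> node_val inp vals a = node_val inp V0 a.
  case=> [t|p] //= Hp.
  by rewrite Hvals nth_cat size_rcons sV0 ltnS ltnW // nth_rcons sV0 Hp.
rewrite Hnv // Hnv // Hvals nth_cat size_rcons sV0 ltnSn nth_rcons sV0 ltnn eqxx.
by [].
Qed.

End Aux.

Theorem mainTheorem3 (n1 n2 m : nat) (F : cnf n1 n2 m) (c : circuit (tt_var F)) :
  unsatisfiable F ->
  circuit_wf c ->
  (forall x : xassign n1, circuit_out c (Uin F x)) ->
  (forall y : yassign n2, ~~ circuit_out c (Vin F y)) ->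
  exists Ls : seq (boolfun n1 n2), CC_refutation 2 F Ls /\ size Ls = m + size c.
Proof.
move=> _ Hwf HU HV.
have c0 : 0 < size c.
  case: c Hwf HU HV => [|g c] //= _ HU _.
  by have := HU [ffun=> false].
pose vU x k := nth false (gate_vals c (Uin F x)) k.
pose vV y k := nth false (gate_vals c (Vin F y)) k.
pose Lg (k : nat) : boolfun n1 n2 := fun x y => ~~ vU x k || vV y k.
pose Lc (i : 'I_m) : boolfun n1 n2 := fun x y => clause_sat (F i) x y.
exists ([seq Lc i | i <- enum 'I_m] ++ [seq Lg k | k <- iota 0 (size c)]).
have sL : size ([seq Lc i | i <- enum 'I_m] ++ [seq Lg k | k <- iota 0 (size c)])
   = m + size c.
  by rewrite size_cat !size_map size_iota -enumT size_enum_ord.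
set Ls := (_ ++ _) in sL *.
have fC : forall i : 'I_m, fnth Ls i = Lc i.
  move=> i; rewrite /fnth /Ls nth_cat size_map size_enum_ord ltn_ord.
  by rewrite (nth_map i) ?size_enum_ord ?ltn_ord // nth_ord_enum.
have fG : forall k, k < size c -> fnth Ls (m + k) = Lg k.
  move=> k Hk; rewrite /fnth /Ls nth_cat size_map size_enum_ord.
  rewrite ltnNge leq_addr /= addKn (nth_map 0) ?size_iota //.
  by rewrite nth_iota.
split=> //; split; last first.
  move=> i; rewrite sL => Hi.
  case: (ltnP i m) => Him.
    rewrite -[i]/(nat_of_ord (Ordinal Him)) fC.
    exists (PAlice (fun x => has (fun l : lit n1 n2 => match l.1 with
                 inl j => x j == l.2 | inr _ => false end) (F (Ordinal Him)))
             (PBob (fun y => has (fun l : lit n1 n2 => match l.1 with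
                 inl _ => false | inr j => y j == l.2 end) (F (Ordinal Him)))
                (PLeaf _ _ false) (PLeaf _ _ true)) (PLeaf _ _ true)).
    split=> // x y /=; rewrite /Lc /clause_sat.
    set A := has _ _; set B := has _ _.
    have -> : has (fun l => lit_sat l x y) (F (Ordinal Him)) = A || B.
      rewrite -has_predU; apply: eq_has; case=> [[j|j] b] //=; rewrite /lit_sat /=.
        by rewrite orbF.
    by case: A; case: B.
  have Hk : i - m < size c by rewrite ltn_subLR.
  rewrite -(subnKC Him) fG //.
  exists (PAlice (fun x => vU x (i - m)) (PLeaf _ _ true)
            (PBob (fun y => vV y (i - m)) (PLeaf _ _ false) (PLeaf _ _ true))).
  split=> // x y /=; rewrite /Lg.
  by case: (vU x _); case: (vV y _).
split.
- by rewrite sL leq_addr.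
- by move=> i x y; rewrite fC.
- split; first by rewrite sL addn_gt0 c0 orbT.
  move=> x y; rewrite sL -{1}(prednK c0) addnS /= fG; last by rewrite prednK.
  rewrite /Lg /vU /vV.
  have sz : forall inp, size (gate_vals c inp) = size c.
    by move=> inp; rewrite gate_valsE size_foldl.
  rewrite -{1}(sz (Uin F x)) -(sz (Vin F y)) !nth_last.
  have := HU x; have := HV y; rewrite /circuit_out.
  by case: (last false _); case: (last false _).
move=> i /andP [Him Hi].
have Hk : i - m < size c by rewrite ltn_subLR // -sL.
set k := i - m in Hk.
set g := nth (Gate true (inr 0) (inr 0)) c k.
have /andP [ok1 ok2] : node_ok k (garg1 g) && node_ok k (garg2 g).
  by move: Hwf => /allP; apply; rewrite mem_iota.
pose idx (a : tt_var F + nat) := match a with inl t => nat_of_ord (projT1 t) | inr p => m + p end.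
have Hidx : forall a, node_ok k a -> idx a < i.
  case=> [t|p] /= Hp.
    by apply: leq_trans Him.
  by rewrite -(subnKC Him) ltn_add2l.
have Himp : forall a, node_ok k a -> forall x y, fnth Ls (idx a) x y ->
   ~~ node_val (Uin F x) (gate_vals c (Uin F x)) a
   || node_val (Vin F y) (gate_vals c (Vin F y)) a.
  case=> [[i0 alpha]|p] /= Hp x y.
    rewrite fC /Lc /Uin /=.
    case: eqP => //= -> Hcl.
    rewrite /Vin /=.
    move: Hcl; rewrite /clause_sat => /hasP [l lin Hl].
    apply/hasP; exists l => //.
    move: Hl; rewrite /lit_sat /lit_sat_part.
    case E: l.1 => [j|j] //.
    have jin : j \in vars F i0.
      by rewrite /vars inE; apply/hasP; exists l => //; rewrite E.
    by rewrite insubT /restrict ffunE.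
  rewrite fG; last by apply: leq_trans Hk; apply: ltnW.
  by [].
exists (idx (garg1 g)), (idx (garg2 g)); split; try by apply: Hidx.
move=> x y /andP [h1 h2].
have := Himp _ ok1 x y h1; have := Himp _ ok2 x y h2.
rewrite -(subnKC Him) fG // /Lg /vU /vV.
rewrite (@gate_vals_nth _ (Uin F x) c k Hk ok1 ok2) (@gate_vals_nth _ (Vin F y) c k Hk ok1 ok2) -/g.
by case: (gop g); case: (node_val _ _ (garg1 g)); case: (node_val _ _ (garg2 g));
   case: (node_val _ _ (garg1 g)); case: (node_val _ _ (garg2 g)).
Qed.
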